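(* Assume $\mathcal I\neq\emptyset$. If the maximal isotropic subspace $\mathcal M=\mathcal M(A,B)$ is strictly positive, then $$\mathbb I+[\mathbb I-\mathfrak S(i\varkappa;\mathcal M)T(i\varkappa;\underline a)]^{-1}\mathfrak S(i\varkappa;\mathcal M)\succ0$$ holds for all sufficiently large $\varkappa\geq0$.
   Context: Let $\mathcal G$ be a finite connected graph with sets $\mathcal I$ of internal edges with lengths $\underline a=\{a_i\}$, $a_i>0$, and $\mathcal E$ of external edges. $\mathcal K=\mathcal K_{\mathcal E}\oplus\mathcal K^{(-)}_{\mathcal I}\oplus\mathcal K^{(+)}_{\mathcal I}\cong\mathbb C^{|\mathcal E|}\oplus\mathbb C^{|\mathcal I|}\oplus\mathbb C^{|\mathcal I|}$, ${}^d\mathcal K=\mathcal K\oplus\mathcal K$. Maximal isotropic subspaces of ${}^d\mathcal K$ (for the form $\langle\chi,J\chi'\rangle$, $J=\begin{pmatrix}0&\mathbb I\\-\mathbb I&0\end{pmatrix}$) are $\mathcal M(A,B)=\{\chi_1\oplus\chi_2:A\chi_1+B\chi_2=0\}$ with $(A,B)$ of rank $\dim\mathcal K$ and $AB^\dagger$ self-adjoint. $\mathfrak S(\mathsf k;\mathcal M)=-(A+i\mathsf kB)^{-1}(A-i\mathsf kB)$ when the inverse exists. $T(\mathsf k;\underline a)=\begin{pmatrix}0&0&0\\0&0&e^{i\mathsf k\underline a}\\0&e^{i\mathsf k\underline a}&0\end{pmatrix}$ w.r.t. $\mathcal K_{\mathcal E}\oplus\mathcal K^{(-)}_{\mathcal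 I}\oplus\mathcal K^{(+)}_{\mathcal I}$, $e^{i\mathsf k\underline a}=\operatorname{diag}(e^{i\mathsf ka_i})$. $C\succ0$ ($C\succcurlyeq0$) means all matrix entries are positive (nonnegative). $\mathcal M$ is strictly positive if there is $\varkappa_0\ge0$ with $\mathbb I+\mathfrak S(i\varkappa;\mathcal M)\succ0$ for all $\varkappa\ge\varkappa_0$. *)

(* Defs.v *)
From HB Require Import structures.
From mathcomp Require Import all_boot all_order all_algebra.
From mathcomp Require Import reals sequences exp trigo.
From mathcomp Require Import complex.
Set Implicit Arguments. Unset Strict Implicit. Unset Printing Implicit Defensive.
Import Order.TTheory GRing.Theory Num.Theory.
Local Open Scope ring_scope.

Notation C R := (R[i]).

(* e^{i k a} for complex k and real a:  k = x + i y  gives  e^{-y a}(cos(x a) + i sin(x a)) *)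
Definition expiC (R : realType) (k : C R) (a : R) : C R :=
  Complex (expR (- complex.Im k * a) * cos (complex.Re k * a)) (expR (- complex.Im k * a) * sin (complex.Re k * a)).

Definition iC (R : realType) : C R := Complex 0 1.

Definition adjmx (R : realType) (m n : nat) (M : 'M[C R]_(m, n)) : 'M[C R]_(n, m) :=
  (map_mx Num.conj M)^T.

(* dimension of K = K_E (+) K_I^- (+) K_I^+ *)
Notation dimK nE nI := (nE + (nI + nI))%N.

(* (A,B) defines a maximal isotropic subspace M(A,B): rank(A,B) = dim K and A B^dagger self-adjoint *)
Definition max_isotropic (R : realType) (n : nat) (A B : 'M[C R]_n) : Prop :=
  \rank (row_mx A B) = n /\ A *m adjmx B = adjmx (A *m adjmx B).

Definition ApkB (R : realType) (n : nat) (A B : 'M[C R]_n) (k : C R) : 'M[C R]_n :=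
  A + (iC R * k) *: B.

Definition Smat (R : realType) (n : nat) (A B : 'M[C R]_n) (k : C R) : 'M[C R]_n :=
  - (invmx (A + (iC R * k) *: B) *m (A - (iC R * k) *: B)).

(* T(k; a) w.r.t. K_E (+) K_I^- (+) K_I^+ *)
Definition Tmat (R : realType) (nE nI : nat) (k : C R) (a : 'I_nI -> R)
  : 'M[C R]_(dimK nE nI) :=
  let D := diag_mx (\row_(i < nI) expiC k (a i)) in
  block_mx 0 0 0 (block_mx 0 D D 0).

(* C ≻ 0 : all entries positive (positive complex number = positive real) *)
Definition mx_pos (R : realType) (m n : nat) (M : 'M[C R]_(m, n)) : Prop :=
  forall i j, 0 < M i j.

Definition iK (R : realType) (kappa : R) : C R := Complex 0 kappa.

Definition strictly_positive (R : realType) (n : nat) (A B : 'M[C R]_n) : Prop :=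
  exists kappa0 : R, 0 <= kappa0 /\
    forall kappa : R, kappa0 <= kappa ->
      ApkB A B (iK kappa) \in unitmx /\ mx_pos (1%:M + Smat A B (iK kappa)).

(* Main.v *)
Require Import Defs.
From HB Require Import structures.
From mathcomp Require Import all_boot all_order all_algebra.
From mathcomp Require Import reals sequences exp trigo.
From mathcomp Require Import complex.
From mathcomp Require Import ring lra zify.
Import Order.TTheory GRing.Theory Num.Theory.
Local Open Scope ring_scope.
Import Normc.
Set Implicit Arguments. Unset Strict Implicit. Unset Printing Implicit Defensive.
Section NC.
Variable R : realType.
Local Notation nc := (@normc R).
Lemma nc_ge0 (z : C R) : 0 <= nc z.
Proof. case: z => a b; exact: sqrtr_ge0. Qed.
Lemma ncR (r : R) : nc (Complex r 0) = `|r|.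
Proof. by rewrite /normc /= expr0n /= addr0 sqrtr_sqr. Qed.
Lemma ncD (x y : C R) : nc (x + y) <= nc x + nc y.
Proof. exact: (@le_normcD R x y). Qed.
Lemma ncN (x : C R) : nc (- x) = nc x.
Proof. exact: (@normcN R x). Qed.
Lemma ncB (x y : C R) : nc x - nc y <= nc (x - y).
Proof. have := ncD (x - y) y; rewrite subrK; lra. Qed.
Lemma ncM (x y : C R) : nc (x * y) = nc x * nc y.
Proof. exact: normcM. Qed.
Lemma ncX (x : C R) n : nc (x ^+ n) = nc x ^+ n.
Proof. elim: n => [|n IH]; first by rewrite !expr0 normc1. by rewrite !exprS ncM IH. Qed.
Lemma ncV (x : C R) : nc (x^-1) = (nc x)^-1.
Proof. exact: normcV. Qed.
Lemma nc_sum (I : Type) (r : seq I) (P : pred I) (F : I -> C R) :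
  nc (\sum_(i <- r | P i) F i) <= \sum_(i <- r | P i) nc (F i).
Proof.
elim/big_rec2: _ => [|i y1 y2 _ H]; first by rewrite normc0.
by apply: le_trans (ncD _ _) _; rewrite lerD2l.
Qed.
Lemma Re_le_nc (z : C R) : `|complex.Re z| <= nc z.
Proof.
case: z => a b /=; rewrite -sqrtr_sqr; apply: ler_wsqrtr.
by rewrite lerDl sqr_ge0.
Qed.
Lemma nc_pos (z : C R) : 0 < z -> nc z = complex.Re z.
Proof.
case: z => a b; rewrite ltcE => /andP[/eqP Hb H]; rewrite /= in Hb H.
by rewrite Hb ncR gtr0_norm.
Qed.
Lemma nc0 : nc 0 = 0. Proof. exact: normc0. Qed.
Lemma nc_eq0 z : (nc z == 0) = (z == 0).
Proof. apply/eqP/eqP => [/eq0_normc //|->]; exact: nc0. Qed.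
End NC.
Section EV.
Variable R : realType.
Definition ev (P : R -> Prop) := exists M : R, forall x, M <= x -> P x.
Lemma evI P Q : ev P -> ev Q -> ev (fun x => P x /\ Q x).
Proof.
move=> [M1 H1] [M2 H2]; exists (Num.max M1 M2) => x; rewrite ge_max => /andP[a b].
by split; [apply: H1|apply: H2].
Qed.
Lemma evW (P Q : R -> Prop) : ev P -> (forall x, P x -> Q x) -> ev Q.
Proof. by move=> [M H] HPQ; exists M => x /H /HPQ. Qed.
Lemma ev_ge c : ev (fun x => c <= x).
Proof. by exists c. Qed.
Lemma ev_fin (I : finType) (P : I -> R -> Prop) :
  (forall i, ev (P i)) -> ev (fun x => forall i, P i x).
Proof.
move=> H; have [M HM] := fin_all_exists H.
exists (\sum_i `|M i|) => x Hx i; apply: HM; apply: le_trans Hx.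
apply: le_trans (ler_norm _) _.
rewrite (bigD1 i) //= lerDl; apply: sumr_ge0 => j _; exact: normr_ge0.
Qed.
End EV.
Section PolyB.
Variable R : realType.
Local Notation nc := (@normc R).
Local Notation rc k := (Complex k (0:R)).
Lemma rcX (k : R) n : nc ((rc k) ^+ n) = `|k| ^+ n.
Proof. by rewrite ncX ncR. Qed.
Lemma coefsum_bound (p : {poly C R}) (k : R) : 1 <= k ->
  nc p.[rc k] <= (\sum_(i < size p) nc p`_i) * k ^+ size p.
Proof.
move=> k1; rewrite horner_coef; apply: le_trans (nc_sum _ _ _) _.
rewrite mulr_suml; apply: ler_sum => i _; rewrite ncM rcX ger0_norm; last lra.
apply: ler_wpM2l; first exact: nc_ge0. apply: ler_weXn2l => //; exact: ltnW (ltn_ord i).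
Qed.
Lemma poly_up (p : {poly C R}) : ev (fun k => nc p.[rc k] <= k ^+ (size p).+1).
Proof.
have := evI (ev_ge (1:R)) (ev_ge (\sum_(i < size p) nc p`_i)).
move=> H. refine (evW H _) => k [k1 kK].
apply: le_trans (coefsum_bound p k1) _; rewrite exprS ler_wpM2r //.
apply: exprn_ge0; lra.
Qed.
Lemma poly_low (p : {poly C R}) : p != 0 -> ev (fun k => k^-1 <= nc p.[rc k]).
Proof.
move=> p0; have sp : size p = (size p).-1.+1 by rewrite prednK // size_poly_gt0.
set d := (size p).-1 in sp.
set L := nc p`_d.
have L0 : 0 < L by rewrite lt_def nc_ge0 andbT nc_eq0 -lead_coefE lead_coef_eq0.
set K := \sum_(i < d) nc p`_i.
have K0 : 0 <= K by apply: sumr_ge0 => i _; exact: nc_ge0.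
have H := evI (ev_ge (1:R)) (ev_ge ((1 + K) / L)). apply: (evW H) => k [k1 kK].
rewrite horner_coef sp big_ord_recr /=.
set S := \sum_(i < d) _.
have H1 : nc (p`_d * rc k ^+ d) - nc S <= nc (S + p`_d * rc k ^+ d).
  by rewrite (addrC S); have := ncB (p`_d * rc k ^+ d) (- S); rewrite ncN opprK.
rewrite ncM rcX ger0_norm in H1; last lra.
have H2 : k * nc S <= K * k ^+ d.
  apply: le_trans (ler_wpM2l _ (nc_sum _ _ _)) _; first lra.
  rewrite mulr_sumr mulr_suml; apply: ler_sum => i _.
  rewrite ncM rcX ger0_norm; last lra.
  rewrite mulrCA; apply: ler_wpM2l; first exact: nc_ge0. rewrite -exprS.
  apply: ler_weXn2l => //; exact: ltn_ord i.
have H3 : 1 <= k ^+ d by apply: exprn_ege1.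
have H4 : 1 + K <= k * L by rewrite -ler_pdivrMr.
have S0 := nc_ge0 S.
have kpos : 0 < k by lra.
rewrite -(ler_pM2l kpos) mulfV ?gt_eqF //.
set t := k ^+ d in H1 H2 H3 *.
set s := nc S in H1 H2 S0.
set N := nc (S + _) in H1 *.
have E1 : k * (L * t - s) <= k * N by apply: ler_wpM2l => //; lra.
have E2 : t * (1 + K) <= t * (k * L) by apply: ler_wpM2l => //; lra.
nra.
Qed.
End PolyB.
Section MxB.
Variable R : realType.
Local Notation nc := (@normc R).
Lemma mx_prod_bound m n p (P : 'M[C R]_(m, n)) (Q : 'M[C R]_(n, p)) a b :
  (forall i j, nc (P i j) <= a) -> (forall i j, nc (Q i j) <= b) ->
  forall i j, nc ((P *m Q) i j) <= n%:R * (a * b).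
Proof.
move=> HP HQ i j; rewrite mxE; apply: le_trans (nc_sum _ _ _) _.
have -> : n%:R * (a * b) = \sum_(k < n) (a * b).
  by rewrite sumr_const card_ord mulr_natl.
apply: ler_sum => k _; rewrite ncM; apply: ler_pM => //; exact: nc_ge0.
Qed.

Lemma row_bound n (E : 'M[C R]_n) e (v : 'rV[C R]_n) b :
  (forall l m, nc (E l m) <= e) -> n%:R * e <= 1/2 ->
  (forall k, nc ((v *m (1%:M - E)) 0 k) <= b) -> forall j, nc (v 0 j) <= 2 * b.
Proof.
move=> HE Hn Hb j.
have b0 : 0 <= b by apply: le_trans (Hb j); exact: nc_ge0.
have e0 : 0 <= e by apply: le_trans (HE j j); exact: nc_ge0.
set s := \sum_(k < n) nc (v 0 k).
have Hk : forall k, nc (v 0 k) <= b + e * s.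
  move=> k; have := Hb k; rewrite mulmxBr mulmx1 mxE [X in _ + X]mxE => H.
  have H2 : nc (v 0 k) <= nc (v 0 k - (v *m E) 0 k) + nc ((v *m E) 0 k).
    by apply: le_trans (ncD _ _); rewrite subrK.
  have H3 : nc ((v *m E) 0 k) <= e * s.
    rewrite mxE; apply: le_trans (nc_sum _ _ _) _; rewrite /s mulr_sumr.
    apply: ler_sum => l _; rewrite ncM mulrC; apply: ler_wpM2r => //; exact: nc_ge0.
  lra.
have Hs : s <= n%:R * b + n%:R * e * s.
  have -> : n%:R * b + n%:R * e * s = \sum_(k < n) (b + e * s).
    by rewrite sumr_const card_ord -mulr_natl; ring.
  exact: ler_sum => k _.
have s0 : 0 <= s by apply: sumr_ge0 => k _; exact: nc_ge0.
have n0 : 0 <= n%:R :> R by exact: ler0n.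
have Hs2 : s <= 2 * n%:R * b by nra.
have := Hk j; nra.
Qed.

Lemma inv_bound n (E : 'M[C R]_n) e :
  (forall l m, nc (E l m) <= e) -> n%:R * e <= 1/2 ->
  (1%:M - E) \in unitmx /\ forall i k, nc (invmx (1%:M - E) i k) <= 2.
Proof.
move=> HE Hn.
have U : (1%:M - E) \in unitmx.
  rewrite unitmxE unitfE; apply/negP => /det0P [v v0 vF].
  move/eqP: v0; apply; apply/matrixP => i j; rewrite ord1 mxE.
  apply/eqP; rewrite -nc_eq0 eq_le nc_ge0 andbT.
  have := row_bound HE Hn (b := 0) _ j; rewrite mulr0; apply.
  by move=> k; rewrite vF mxE nc0.
split => // i k.
have := row_bound HE Hn (v := row i (invmx (1%:M - E))) (b := 1) _ k.
rewrite mulr1 mxE; apply => l.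
rewrite -row_mul mulVmx // mxE !mxE.
by case: (i == l); rewrite ?normc1 ?nc0 //; lra.
Qed.
End MxB.
Section ExpB.
Variable R : realType.
Local Notation nc := (@normc R).
Lemma exp_dom (a c : R) D : 0 < a -> ev (fun k => c * k ^+ D < expR (k * a)).
Proof.
move=> a0.
have al : 0 < a ^+ D.+1 by exact: exprn_gt0.
have F0 : 0 < (D.+1)`!%:R :> R by rewrite ltr0n fact_gt0.
have H := evI (ev_ge (1:R)) (ev_ge (`|c| * (D.+1)`!%:R / a ^+ D.+1)).
apply: (evW H) => k [k1 kc].
have k0 : 0 <= k * a by apply: mulr_ge0; lra.
apply: lt_le_trans (expR_ge1Dxn D k0).
rewrite exprMn exprS.
have kD : 0 <= k ^+ D by apply: exprn_ge0; lra.
have H1 : `|c| <= k * a ^+ D.+1 / (D.+1)`!%:R.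
  rewrite ler_pdivlMr // -ler_pdivrMr //.
have H2 : c * k ^+ D <= `|c| * k ^+ D by exact: (ler_wpM2r kD (ler_norm c)).
have H3 : `|c| * k ^+ D <= k * k ^+ D * a ^+ D.+1 / (D.+1)`!%:R.
  have E : k * a ^+ D.+1 / (D.+1)`!%:R * k ^+ D = k * k ^+ D * a ^+ D.+1 / (D.+1)`!%:R by ring.
  by rewrite -E; exact: (ler_wpM2r kD H1).
lra.
Qed.
End ExpB.

Section TB.
Variable R : realType.
Local Notation nc := (@normc R).
Lemma expiC_iK (k x : R) : expiC (iK k) x = Complex (expR (- (k * x))) 0.
Proof. by rewrite /expiC /iK /= mul0r cos0 sin0 mulr1 mulr0 mulNr. Qed.

Lemma unsplit_inl m n (j : 'I_m) : unsplit (inl j : 'I_m + 'I_n) = lshift n j.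
Proof. by []. Qed.
Lemma unsplit_inr m n (j : 'I_n) : unsplit (inr j : 'I_m + 'I_n) = rshift m j.
Proof. by []. Qed.
Lemma T_entry nE nI (k : R) (a : 'I_nI -> R) l m :
  Tmat nE (iK k) a l m = 0 \/ exists i, Tmat nE (iK k) a l m = Complex (expR (- (k * a i))) 0.
Proof.
rewrite /Tmat -[l]splitK -[m]splitK.
case: (split l) => l'; case: (split m) => m'; rewrite ?unsplit_inl ?unsplit_inr;
  rewrite ?block_mxEul ?block_mxEur ?block_mxEdl ?block_mxEdr; try by rewrite mxE; left.
rewrite -[l']splitK -[m']splitK.
case: (split l') => l''; case: (split m') => m''; rewrite ?unsplit_inl ?unsplit_inr;
  rewrite ?block_mxEul ?block_mxEur ?block_mxEdl ?block_mxEdr ?mxE; try by left.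
- case: eqP => [->|_]; last by left.
  by right; exists m''; rewrite mulr1n expiC_iK.
- case: eqP => [->|_]; last by left.
  by right; exists m''; rewrite mulr1n expiC_iK.
Qed.
End TB.
Section Aux.
Variable R : realType.
Local Notation nc := (@normc R).
Lemma pos_add (X Y : C R) : 0 < X -> complex.Im Y = 0 -> nc Y < nc X -> 0 < X + Y.
Proof.
move=> Xp; have := nc_pos Xp; move: Xp.
case: X => a b; case: Y => c d; rewrite !ltcE => /andP[/eqP hb ha] -> /= hd.
rewrite /= in hb ha; rewrite hb hd expr0n addr0 sqrtr_sqr => H.
rewrite addr0 eqxx /=; have := ler_norm (- c); rewrite normrN; lra.
Qed.
Lemma conj_real (z : C R) : complex.Im z = 0 -> conjc z = z.
Proof. by case: z => a b /= ->; rewrite /conjc oppr0. Qed.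
Lemma real_conj (z : C R) : conjc z = z -> complex.Im z = 0.
Proof. case: z => a b [] /= H; lra. Qed.
Lemma pos_Im (z : C R) : 0 < z -> complex.Im z = 0.
Proof. by case: z => a b; rewrite ltcE /= => /andP[/eqP -> _]. Qed.
End Aux.
Section Aux2.
Variable R : realType.
Lemma Im_add (w z : C R) : complex.Im (w + z) = complex.Im w + complex.Im z.
Proof. by case: w; case: z. Qed.
Lemma Im_natb (b : bool) : complex.Im ((1 : C R) *+ b) = 0.
Proof. by case: b. Qed.
End Aux2.
Section Arith.
Variable R : realType.
Lemma arith (k sg q tau c nn nI' : R) :
 1 <= k -> 1 <= sg -> 1 <= q -> 0 <= tau -> 1 <= nn -> 0 <= nI' ->
 c = 2 * nn^+3 * nI' + 1 ->
 tau * (c * (sg * sg * q * k)) <= nI' ->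
 nn * (nn * (sg * tau)) <= 1/2 /\ nn * (nn * (2 * (nn * (sg * tau))) * sg) * (k * q) < 1.
Proof.
move=> k1 s1 q1 t0 n1 nI0 ce H.
set Z := tau * (sg * sg * q * k).
have Z0 : 0 <= Z by rewrite /Z; apply: mulr_ge0 => //; apply: mulr_ge0; [apply: mulr_ge0|]; [apply: mulr_ge0| |]; lra.
have n3 : 0 <= nn ^+ 3 by apply: exprn_ge0; lra.
have HZ : Z * c <= nI' by rewrite /Z; move: H; rewrite mulrCA mulrC.
have c1 : 1 <= c by rewrite ce; have := mulr_ge0 (mulr_ge0 (ler0n _ 2) n3) nI0; lra.
have H2 : 2 * nn ^+ 3 * (Z * c) <= 2 * nn ^+ 3 * nI' by apply: ler_wpM2l => //; lra.
have Z1 : 2 * nn ^+ 3 * Z < 1.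
  rewrite ltNge; apply/negP => h.
  have := ler_wpM2r (ltW (lt_le_trans ltr01 c1)) h; rewrite mul1r; nra.
have E1 : nn * (nn * (2 * (nn * (sg * tau))) * sg) * (k * q) = 2 * nn ^+ 3 * Z.
  by rewrite /Z; ring.
split; last by rewrite E1.
have st : sg * tau <= Z.
  rewrite /Z mulrC; apply: ler_wpM2l => //.
  have h1 : 1 <= sg * q by rewrite -[1]mulr1; apply: ler_pM => //; lra.
  have h2 : 1 <= sg * q * k by rewrite -[1]mulr1; apply: ler_pM => //; lra.
  have h3 : sg <= sg * (sg * q * k) by rewrite -{1}[sg]mulr1; apply: ler_wpM2l => //; lra.
  by apply: le_trans h3 _; rewrite !mulrA.
have nn2 : nn * (nn * (sg * tau)) <= nn ^+ 3 * Z.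
  have n2 : 0 <= nn * nn by nra.
  have : nn * nn * (sg * tau) <= nn * nn * Z by apply: ler_wpM2l.
  have : nn * nn * Z <= nn * nn * nn * Z.
    apply: ler_wpM2r => //; rewrite -{1}[nn * nn]mulr1; apply: ler_wpM2l => //.
  have -> : nn ^+ 3 = nn * nn * nn by rewrite !exprS expr0 mulr1 mulrA.
  rewrite !mulrA; lra.
lra.
Qed.
End Arith.
Local Notation nc := (@normc _).
Unset Implicit Arguments.

Theorem lemma4p6 (R : realType) (nE nI : nat) (a : 'I_nI -> R)
    (A B : 'M[C R]_(dimK nE nI)) :
  (0 < nI)%N ->
  (forall i, 0 < a i) ->
  max_isotropic A B ->
  strictly_positive A B ->
  exists kappa1 : R, 0 <= kappa1 /\
    forall kappa : R, kappa1 <= kappa ->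
      let S := Smat A B (iK kappa) in
      let T := Tmat nE (iK kappa) a in
      [/\ ApkB A B (iK kappa) \in unitmx,
          (1%:M - S *m T) \in unitmx &
          mx_pos (1%:M + invmx (1%:M - S *m T) *m S)].
Proof.
move=> nI0 apos _ [k0 [k00 H0]].
set n := dimK nE nI.
pose MP : 'M[{poly C R}]_n := \matrix_(i, j) ((A i j)%:P - (B i j)%:P * 'X).
pose NP : 'M[{poly C R}]_n := \matrix_(i, j) ((A i j)%:P + (B i j)%:P * 'X).
pose PP := \adj MP *m NP.
pose Q := \det MP.
pose XP i j := Q *+ (i == j) - PP i j.
have hk : forall k : R, iC R * iK k = - Complex k 0.
  move=> k; rewrite /iC /iK; apply/eqP; rewrite eq_complex /=.
  by rewrite !mul0r !mul1r sub0r add0r oppr0 !eqxx.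
have evM : forall k, map_mx (horner_eval (Complex k 0)) MP = ApkB A B (iK k).
  move=> k; apply/matrixP => i j; rewrite /ApkB hk !mxE horner_evalE.
  by rewrite hornerD hornerN hornerMX !hornerC mulNr mulrC.
have evN : forall k, map_mx (horner_eval (Complex k 0)) NP = A - (iC R * iK k) *: B.
  move=> k; apply/matrixP => i j; rewrite hk !mxE /horner_eval.
  by rewrite hornerD hornerMX !hornerC mulNr opprK mulrC.
have detE : forall k, \det (ApkB A B (iK k)) = Q.[Complex k 0].
  by move=> k; rewrite -evM det_map_mx /horner_eval.
have SE : forall k, ApkB A B (iK k) \in unitmx -> forall i j,
    Smat A B (iK k) i j = - ((Q.[Complex k 0])^-1 * (PP i j).[Complex k 0]).
  move=> k U i j; rewrite /Smat.
  change (invmx (A + (iC R * iK k) *: B)) with (invmx (ApkB A B (iK k))).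
  rewrite /invmx U detE -evM -map_mx_adj -evN -scalemxAl -map_mxM.
  by rewrite !mxE /horner_eval.
have Qx0 : forall k, ApkB A B (iK k) \in unitmx -> Q.[Complex k 0] != 0.
  by move=> k; rewrite unitmxE detE unitfE.
have XE : forall k, ApkB A B (iK k) \in unitmx -> forall i j,
    (1%:M + Smat A B (iK k)) i j = (XP i j).[Complex k 0] / Q.[Complex k 0].
  move=> k U i j; have := Qx0 k U => q0.
  rewrite mxE [1%:M i j]mxE SE // /XP hornerD hornerN hornerMn.
  by case: (i == j) => /=; field.
have [U0 P0] := H0 k0 (lexx k0).
have Q0 : Q != 0.
  by apply/negP => /eqP Qe; move: (Qx0 k0 U0); rewrite Qe horner0 eqxx.
have XP0 : forall i j, XP i j != 0.
  move=> i j; apply/negP => /eqP Xe; move: (P0 i j); rewrite XE // Xe horner0 mul0r.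
  by rewrite ltxx.
pose dQ := (size Q).+1.
pose dP := (\max_(ij : 'I_n * 'I_n) (size (PP ij.1 ij.2)).+1)%N.
pose dS := dP.+1.
pose D := (dS + dS + dQ).+1.
pose nn : R := n%:R.
pose c : R := 2 * nn ^+ 3 * nI%:R + 1.
have EP := @ev_fin R _ (fun ij k => nc (PP ij.1 ij.2).[Complex k 0] <= k ^+ (size (PP ij.1 ij.2)).+1)
   (fun ij => poly_up (PP ij.1 ij.2)).
have EX := @ev_fin R _ (fun ij k => k^-1 <= nc (XP ij.1 ij.2).[Complex k 0])
   (fun ij => poly_low (XP0 ij.1 ij.2)).
have EE := @ev_fin R _ (fun i k => c * k ^+ D < expR (k * a i)) (fun i => exp_dom c D (apos i)).
have [M HM] := evI (ev_ge k0) (evI (ev_ge 1) (evI (poly_low Q0) (evI (poly_up Q) (evI EP (evI EX EE))))).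
exists (Num.max M 0); split; first by rewrite le_max lexx orbT.
move=> k; rewrite ge_max => /andP[kM _].
have [kk0 [k1 [Ql [Qu [Pu [Xl Ee]]]]]] := HM k kM.
have [U Xpos] := H0 k kk0.
move=> S T.
have kp : 0 < k by apply: lt_le_trans k1; exact: ltr01.
pose x := Complex k (0:R).
pose sg := k ^+ dS.
pose q := k ^+ dQ.
pose tau := \sum_(i < nI) expR (- (k * a i)).
have sg1 : 1 <= sg by apply: exprn_ege1.
have q1 : 1 <= q by apply: exprn_ege1.
have tau0 : 0 <= tau by apply: sumr_ge0 => i _; exact: expR_ge0.
have Qpos : 0 < nc Q.[x].
  by apply: lt_le_trans Ql; rewrite invr_gt0.
have BS : forall i j, nc (S i j) <= sg.
  move=> i j; rewrite /S SE // ncN ncM ncV.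
  have h1 : (nc Q.[x])^-1 <= k.
    by rewrite -[k in _ <= k]invrK lef_pV2 ?posrE ?invr_gt0.
  have h2 : nc (PP i j).[x] <= k ^+ dP.
    apply: le_trans (Pu (i, j)) _; apply: ler_weXn2l => //.
    by have := @leq_bigmax _ (fun ij : 'I_n * 'I_n => (size (PP ij.1 ij.2)).+1) (i, j).
  rewrite /sg /dS exprS; apply: ler_pM h1 h2; [by rewrite invr_ge0 ltW | exact: nc_ge0].
have BT : forall l m, nc (T l m) <= tau.
  move=> l m; case: (T_entry k a l m) => [->|[i ->]]; first by rewrite nc0.
  rewrite ncR ger0_norm ?expR_ge0 // /tau (bigD1 i) //= lerDl.
  by apply: sumr_ge0 => j _; exact: expR_ge0.
have TI : forall l m, complex.Im (T l m) = 0.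
  by move=> l m; case: (T_entry k a l m) => [->|[i ->]].
have kD : k ^+ D = sg * sg * q * k by rewrite /D exprS !exprD mulrC.
have tauc : tau * (c * (sg * sg * q * k)) <= nI%:R.
  rewrite -kD /tau mulr_suml.
  have -> : (nI%:R : R) = \sum_(i < nI) 1 by rewrite sumr_const card_ord.
  apply: ler_sum => i _; have h := Ee i.
  rewrite expRN mulrC ler_pdivrMr ?expR_gt0 // mul1r; exact: ltW h.
have n1 : 1 <= nn by rewrite /nn ler1n /n !addn_gt0 nI0 !orbT.
have [Hn Hfin] := arith k1 sg1 q1 tau0 n1 (ler0n _ nI) (erefl c) tauc.
have HE := mx_prod_bound BS BT.
have [U' BW] := inv_bound HE Hn.
split => //.
set W := invmx (1%:M - S *m T).
have BWST := mx_prod_bound BW HE.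
have BY := mx_prod_bound BWST BS.
have Id : W *m S = S + (W *m (S *m T)) *m S.
  have h := mulKmx U' S; rewrite mulmxBl mul1mx mulmxBr in h.
  by move/eqP: h; rewrite subr_eq => /eqP ->; rewrite -mulmxA.
have SR : map_mx conjc S = S.
  apply/matrixP => i j; rewrite mxE; apply: conj_real.
  have := pos_Im (Xpos i j); rewrite mxE [1%:M i j]mxE Im_add Im_natb add0r //.
have TR : map_mx conjc T = T.
  by apply/matrixP => i j; rewrite mxE; apply: conj_real; exact: TI.
have WR : map_mx conjc W = W.
  by rewrite /W map_invmx map_mxB map_mx1 map_mxM SR TR.
have YR : map_mx conjc ((W *m (S *m T)) *m S) = (W *m (S *m T)) *m S.
  by rewrite !map_mxM WR SR TR.
move=> i j; rewrite Id addrA [X in 0 < X]mxE.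
apply: pos_add (Xpos i j) _ _.
  by apply: real_conj; have := congr1 (fun M : 'M[C R]_n => M i j) YR; rewrite mxE.
apply: le_lt_trans (BY i j) _.
have Qu' : (nc Q.[x])^-1 >= q^-1.
  by rewrite lef_pV2 ?posrE // (lt_le_trans ltr01 q1).
have XL := Xl (i, j).
have kq : 0 < k * q by apply: mulr_gt0 => //; exact: lt_le_trans ltr01 q1.
apply: (@lt_le_trans _ _ ((k * q)^-1)).
  by rewrite -div1r ltr_pdivlMr.
rewrite XE // ncM ncV invfM; apply: ler_pM => //.
- by rewrite invr_ge0 ltW.
- by rewrite invr_ge0 ltW // (lt_le_trans ltr01 q1).
Qed.
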